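(* Let $\mathcal{T}$ be a separable multi-transducer with a single initial state. Then $[\![\mathcal{T}]\!]$ is multi-sequential.
   Context: A multi-transducer is a tuple $\mathcal{T}=(Q,E,I,F,f)$ with finite state set $Q$, initial states $I$, final states $F$, transitions $E\subseteq Q\times\Sigma\times\Gamma^*\times Q$, and a final output function $f$ mapping each final state to a finite set of words of $\Gamma^*$; it realises $[\![\mathcal{T}]\!]=\{(u,wx) : i\xrightarrow{u\mid w}t,\ i\in I,\ t\in F,\ x\in f(t)\}$, where $i\xrightarrow{u\mid w}t$ means a run from $i$ to $t$ reading $u$ and outputting $w$. A transition is transient if its source and target lie in distinct strongly connected components (equivalently there is no run from its target to its source). $\mathcal{T}$ is separable if it has a single initial state and any two distinct transitions with the same source and the same input letter are transient. A transducer (final output function into $\Gamma^*$) is sequential if it has a single initial state and at most one transition per (state, input letter); a sequential function is one realised by a sequential transducer; a relation is multi-sequential if it is a finite union of sequential functions. *)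

(* Defs.v *)
From mathcomp Require Import all_boot.
Set Implicit Arguments. Unset Strict Implicit. Unset Printing Implicit Defensive.

(* T = (Q, E, I, F, f) over input alphabet Sigma and output alphabet Gamma.
   E is a finite set of transitions (p, a, w, q), represented by a seq;
   f t is the finite set of final output words of a final state t. *)
Record mtrans (Sigma Gamma : finType) := MTrans {
  mt_state : finType;
  mt_trans : seq (mt_state * Sigma * seq Gamma * mt_state);
  mt_init  : {set mt_state};
  mt_final : {set mt_state};
  mt_out   : mt_state -> seq (seq Gamma)
}.
Arguments mt_state {Sigma Gamma}.
Arguments mt_trans {Sigma Gamma}.
Arguments mt_init {Sigma Gamma}.
Arguments mt_final {Sigma Gamma}.
Arguments mt_out {Sigma Gamma}.

Section MT.
Variables (Sigma Gamma : finType) (T : mtrans Sigma Gamma).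

Inductive mrun : mt_state T -> seq Sigma -> seq Gamma -> mt_state T -> Prop :=
| mrun_nil q : mrun q [::] [::] q
| mrun_cons p a w q u w' r :
    (p, a, w, q) \in mt_trans T -> mrun q u w' r -> mrun p (a :: u) (w ++ w') r.

Definition mrel (u : seq Sigma) (v : seq Gamma) : Prop :=
  exists i t w x, [/\ i \in mt_init T, mrun i u w t, t \in mt_final T,
                      x \in mt_out T t & v = w ++ x].

Definition transient (e : mt_state T * Sigma * seq Gamma * mt_state T) : Prop :=
  let: (p, _, _, q) := e in ~ (exists u w, mrun q u w p).

Definition separable : Prop :=
  (exists i, mt_init T = [set i]) /\
  forall e1 e2, e1 \in mt_trans T -> e2 \in mt_trans T -> e1 <> e2 ->
    e1.1.1.1 = e2.1.1.1 -> e1.1.1.2 = e2.1.1.2 ->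
    transient e1 /\ transient e2.
End MT.

(* single initial state, at most one transition per (state, letter) given by a
   partial function, partial final output function into Gamma^* (its domain is
   the set of final states). *)
Record strans (Sigma Gamma : finType) := STrans {
  st_state : finType;
  st_init  : st_state;
  st_delta : st_state -> Sigma -> option (seq Gamma * st_state);
  st_out   : st_state -> option (seq Gamma)
}.
Arguments st_state {Sigma Gamma}.
Arguments st_init {Sigma Gamma}.
Arguments st_delta {Sigma Gamma}.
Arguments st_out {Sigma Gamma}.

Section ST.
Variables (Sigma Gamma : finType) (T : strans Sigma Gamma).

Fixpoint srun (q : st_state T) (u : seq Sigma) : option (seq Gamma * st_state T) :=
  match u with
  | [::] => Some ([::], q)
  | a :: u' =>
      match st_delta T q a with
      | None => None
      | Some (w, q') =>
          match srun q' u' with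
          | None => None
          | Some (w', r) => Some (w ++ w', r)
          end
      end
  end.

Definition srel (u : seq Sigma) (v : seq Gamma) : Prop :=
  exists w t x, [/\ srun (st_init T) u = Some (w, t), st_out T t = Some x & v = w ++ x].
End ST.

Definition sequential_function (Sigma Gamma : finType)
  (R : seq Sigma -> seq Gamma -> Prop) : Prop :=
  exists T : strans Sigma Gamma, forall u v, R u v <-> srel T u v.

Definition multi_sequential (Sigma Gamma : finType)
  (R : seq Sigma -> seq Gamma -> Prop) : Prop :=
  exists (k : nat) (Rs : 'I_k -> seq Sigma -> seq Gamma -> Prop),
    (forall i, sequential_function (Rs i)) /\
    forall u v, R u v <-> exists i, Rs i u v.

(* Main.v *)
Require Import Defs.
From mathcomp Require Import all_boot.
Set Implicit Arguments. Unset Strict Implicit. Unset Printing Implicit Defensive.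

Section Proof.
Variables (Sigma Gamma : finType) (T : mtrans Sigma Gamma).
Local Notation Q := (mt_state T).
Local Notation E := (Q * Sigma * seq Gamma * Q)%type.
Local Notation tr := (mt_trans T).

Definition src (e : E) : Q := e.1.1.1.
Definition lt_ (e : E) : Sigma := e.1.1.2.
Definition out (e : E) : seq Gamma := e.1.2.
Definition tgt (e : E) : Q := e.2.

Fixpoint chain (p : Q) (es : seq E) (r : Q) : bool :=
  match es with
  | [::] => p == r
  | e :: es' => (src e == p) && chain (tgt e) es' r
  end.

Lemma chain_cat p s1 s2 r : chain p (s1 ++ s2) r ->
  exists x, chain p s1 x /\ chain x s2 r.
Proof.
elim: s1 p => [|e s1 IH] p /=; first by move=> H; exists p.
case/andP=> H1 /IH [x [H2 H3]]; exists x; by rewrite H1 H2.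
Qed.

Lemma chain_run p es r : chain p es r -> {subset es <= tr} ->
  @mrun _ _ T p (map lt_ es) (flatten (map out es)) r.
Proof.
elim: es p => [|e es IH] p /=; first by move/eqP->; constructor.
case/andP=> /eqP He Hc Hs.
move: (Hs e (mem_head _ _)); case: e He Hc Hs => [[[p' a] w] q]; rewrite /src /= => <- Hc Hs Hin.
apply: mrun_cons; first exact: Hin.
apply: IH => // x Hx; apply: Hs; by rewrite in_cons Hx orbT.
Qed.

Lemma run_chain p u w r : @mrun _ _ T p u w r ->
  exists es, [/\ chain p es r, {subset es <= tr}, u = map lt_ es & w = flatten (map out es)].
Proof.
elim=> [q|p0 a w0 q u0 w' r0 Hin _ [es [H1 H2 H3 H4]]].
  by exists [::]; split => //= x.
exists ((p0, a, w0, q) :: es); split => /=.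
- by rewrite /src eqxx.
- move=> x; rewrite in_cons => /orP [/eqP -> //|]; exact: H2.
- by rewrite H3.
- by rewrite H4.
Qed.

Lemma transientE (e : E) : transient e -> ~ exists u w, @mrun _ _ T (tgt e) u w (src e).
Proof. by case: e => [[[p a] w] q]. Qed.

Lemma uniq_choice : separable T -> forall p es r, chain p es r -> {subset es <= tr} ->
  forall e1 e2, e1 \in es -> e2 \in es -> src e1 = src e2 -> lt_ e1 = lt_ e2 -> e1 = e2.
Proof.
move=> [_ Hsep] p es r Hc Hs e1 e2 H1 H2 Hsrc Hlt.
case: (eqVneq e1 e2) => // Hne; exfalso.
have [T1 T2] := Hsep e1 e2 (Hs _ H1) (Hs _ H2) (fun E0 => ltac:(by rewrite E0 eqxx in Hne)) Hsrc Hlt.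
move: Hc; case/splitPr: H1 H2 Hs => pre post.
rewrite mem_cat in_cons => H2 Hs Hc.
have Hs' : forall x, x \in pre ++ e1 :: post -> x \in tr by [].
case/orP: H2 => [H2|/orP [/eqP E2|H2]].
- move: Hc; case/splitPr: H2 Hs' => pre1 mid Hs' Hc.
  rewrite -catA /= in Hc.
  case: (chain_cat Hc) => x [_ /= /andP [_ Hc2]].
  case: (chain_cat Hc2) => y [Hc3 /= /andP [/eqP Hy _]].
  apply: (transientE T2); exists (map lt_ mid), (flatten (map out mid)).
  have -> : src e2 = y by rewrite -Hsrc.
  apply: chain_run => // z Hz; apply: Hs'; by rewrite !(mem_cat, in_cons) Hz !orbT.
- by rewrite E2 eqxx in Hne.
- move: Hc; case/splitPr: H2 Hs' => mid post2 Hs' Hc.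
  case: (chain_cat Hc) => x [_ /= /andP [Hx Hc2]].
  case: (chain_cat Hc2) => y [Hc3 /= /andP [/eqP Hy _]].
  apply: (transientE T1); exists (map lt_ mid), (flatten (map out mid)).
  have -> : src e1 = y by rewrite Hsrc Hy.
  apply: chain_run => // z Hz; apply: Hs'; by rewrite !(mem_cat, in_cons) Hz !orbT.
Qed.

Definition M := \max_(q : Q) size (mt_out T q).
Definition S : finType := ({ffun (Q * Sigma) -> 'I_(size tr).+1} * {ffun Q -> 'I_M.+1})%type.

Definition sdelta (s : S) (p : Q) (a : Sigma) : option (seq Gamma * Q) :=
  match nth None (map Some tr) (s.1 (p, a)) with
  | Some e => if (src e == p) && (lt_ e == a) then Some (out e, tgt e) else None
  | None => None
  end.

Definition sout (s : S) (t : Q) : option (seq Gamma) :=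
  if (t \in mt_final T) && (s.2 t < size (mt_out T t)) then Some (nth [::] (mt_out T t) (s.2 t))
  else None.

Definition ST (i : Q) (s : S) : strans Sigma Gamma := STrans i (sdelta s) (sout s).

Lemma nth_some (s : seq E) j e : nth None (map Some s) j = Some e -> e \in s.
Proof.
elim: s j => [|x s IH] [|j] //=; first by case=> ->; exact: mem_head.
move/IH; rewrite in_cons => ->; exact: orbT.
Qed.

Lemma sound i s p u w r : @srun _ _ (ST i s) p u = Some (w, r) -> @mrun _ _ T p u w r.
Proof.
elim: u p w => [|a u IH] p w /=; first by case=> <- <-; constructor.
rewrite /sdelta.
case Hn: (nth None _ _) => [e|] //.
case: ifP => // /andP [/eqP Hs /eqP Ha].
case Hr: (srun _ u) => [[w' r']|] // [<- Er]; subst r'.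
have Hin := nth_some Hn.
have Hm := IH _ _ Hr.
rewrite -Hs -Ha; case: e {Hn Hr Hs Ha} Hin Hm => [[[p' a'] w0] q] Hin Hm.
exact: mrun_cons Hin Hm.
Qed.

Definition dof (es : seq E) : {ffun (Q * Sigma) -> 'I_(size tr).+1} :=
  [ffun qb => match [seq e <- es | (src e == qb.1) && (lt_ e == qb.2)] with
              | e :: _ => inord (index e tr)
              | [::] => ord0 end].

Lemma complete_run (Hsep : separable T) i p0 es r0 (o : {ffun Q -> 'I_M.+1}) :
  chain p0 es r0 -> {subset es <= tr} ->
  forall es', {subset es' <= es} -> forall p r, chain p es' r ->
  @srun _ _ (ST i (dof es, o)) p (map lt_ es') = Some (flatten (map out es'), r).
Proof.
move=> Hc Hs; elim=> [|e es' IH] Hsub p r /=; first by move/eqP->.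
case/andP=> /eqP He Hc'.
have Hee : e \in es by apply: Hsub; exact: mem_head.
rewrite /sdelta /= ffunE /=.
have : e \in [seq x <- es | (src x == p) && (lt_ x == lt_ e)] by rewrite mem_filter He !eqxx.
case Hf: [seq x <- es | _] => [|e' l] //= _.
have He' : e' \in [seq x <- es | (src x == p) && (lt_ x == lt_ e)] by rewrite Hf mem_head.
rewrite mem_filter in He'; case/andP: He' => /andP [/eqP Hs' /eqP Hl'] He'.
have Eq : e' = e by apply: (uniq_choice Hsep Hc Hs) => //; rewrite Hs'.
subst e'.
have Hetr := Hs e Hee.
rewrite inordK; last by rewrite ltnS index_size.
rewrite (nth_map e) ?index_mem // nth_index // He !eqxx.
rewrite /= (IH _ _ r Hc') //; move=> x Hx; apply: Hsub; by rewrite in_cons Hx orbT.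
Qed.

Lemma M_bound t : size (mt_out T t) <= M.
Proof. exact: (@leq_bigmax _ (fun q => size (mt_out T q)) t). Qed.

End Proof.

Theorem lemma5 (Sigma Gamma : finType) (T : mtrans Sigma Gamma) :
  separable T -> multi_sequential (mrel T).
Proof.
move=> Hsep; have Hsep' := Hsep; case: Hsep' => [[i Hi] _].
exists #|S T|, (fun j => srel (ST i (enum_val j))); split.
  by move=> j; exists (ST i (enum_val j)).
move=> u v; split.
- case=> i' [t [w [x [Hi' Hr Ht Hx ->]]]].
  move: Hi'; rewrite Hi in_set1 => /eqP Ei; subst i'.
  case: (run_chain Hr) => es [Hc Hs Hu Hw].
  pose o : {ffun mt_state T -> 'I_(M T).+1} := [ffun => inord (index x (mt_out T t))].
  exists (enum_rank ((dof es, o) : S T)); rewrite enum_rankK.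
  exists w, t, x; split => //.
  + rewrite /= Hu Hw; exact: (complete_run Hsep i o Hc Hs).
  + have Hix : index x (mt_out T t) < (M T).+1.
      by rewrite ltnS; move: (index_size x (mt_out T t)) (@M_bound _ _ T t); exact: leq_trans.
    rewrite /= /sout /= ffunE inordK // Ht index_mem Hx /= nth_index //.
- case=> j [w [t [x [Hr Ho ->]]]].
  have Hm := sound Hr.
  move: Ho; rewrite /= /sout; case: ifP => // /andP [Ht Hlt] [<-].
  exists i, t, w, (nth [::] (mt_out T t) ((enum_val j).2 t)); split => //.
  + by rewrite Hi in_set1.
  + exact: mem_nth.
Qed.
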